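(* Let $D$ be a digraph with $\mathrm{ddp}(D)=k$. Then there exists a valid DAG-depth decomposition of $D$ of depth $k$.
   Context: A reachable fragment of a digraph $D$ is a vertex set $R\subseteq V(D)$, maximal by inclusion, that contains a vertex from which every vertex of $R$ is reachable by a directed path in $D$; it is regarded as the induced subdigraph $D[R]$. The DAG-depth $\mathrm{ddp}(D)$ is defined recursively: $\mathrm{ddp}(D)=1$ if $|V(D)|=1$; if $D$ has exactly one reachable fragment and $|V(D)|>1$, then $\mathrm{ddp}(D)=1+\min_{v\in V(D)}\mathrm{ddp}(D-v)$; otherwise, with reachable fragments $R_1,\dots,R_p$, $\mathrm{ddp}(D)=\max_i\mathrm{ddp}(D[R_i])$. A DAG-depth decomposition of $D$ is a pair $(P,\mathrm{org})$ with $P$ a directed acyclic graph and $\mathrm{org}:V(P)\to V(D)$ surjective. Roots of $P$ are vertices of indegree $0$; $w'$ is a descendant of $v'$ if $P$ has a directed path from $v'$ to $w'$. The depth of $P$ is the maximum number of vertices on a directed path in $P$. The decomposition is valid if for every $v'\in V(P)$ with $\mathrm{org}(v')=v$ and every $u\in N^+_D(v)$, either (1) some $u'$ with $\mathrm{org}(u')=u$ is a descendant of $v'$ in $P$, or (2) every directed path in $P$ from a root of $P$ to $v'$ contains a vertex $u'$ with $\mathrm{org}(u')=u$. *)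

(* Defs.v *)
From mathcomp Require Import all_boot.
Set Implicit Arguments. Unset Strict Implicit. Unset Printing Implicit Defensive.

Section DAGDepth.
Variables (V : finType) (E : rel V).

Definition induced (S : {set V}) : rel V :=
  [rel x y | [&& x \in S, y \in S & E x y]].

Definition reach (S : {set V}) (r : V) : {set V} :=
  [set y in S | connect (induced S) r y].

Definition frag_cand (S R : {set V}) : bool :=
  (R \subset S) && [exists r in R, R \subset reach S r].

Definition fragments (S : {set V}) : {set {set V}} :=
  [set R | frag_cand S R &&
           [forall R' : {set V}, (frag_cand S R' && (R \subset R')) ==> (R' == R)]].

(* DAG-depth with fuel; the fuel #|S| suffices since recursive calls are on
   strictly smaller vertex sets. *)
Fixpoint ddp_fuel (n : nat) (S : {set V}) : nat :=
  match n with
  | 0 => 0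
  | n'.+1 =>
      if #|S| == 1 then 1
      else if #|fragments S| == 1 then
        (\big[minn/#|S|]_(v in S) ddp_fuel n' (S :\ v)).+1
      else \max_(R in fragments S) ddp_fuel n' R
  end.

(* ddp(D[S]) for nonempty S. *)
Definition ddp (S : {set V}) : nat := ddp_fuel #|S| S.

End DAGDepth.

Section Decomposition.
Variables (V : finType) (E : rel V) (n : nat) (F : rel 'I_n) (org : 'I_n -> V).

Definition acyclic_rel : Prop := forall x y : 'I_n, F x y -> ~~ connect F y x.

Definition is_root (w : 'I_n) : bool := [forall x, ~~ F x w].

Definition descendant (v' w' : 'I_n) : bool := connect F v' w'.

(* Number of vertices on a directed path x :: p is (size p).+1. *)
Definition depth (k : nat) : Prop :=
  (exists (x : 'I_n) (p : seq 'I_n), path F x p /\ (size p).+1 = k) /\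
  (forall (x : 'I_n) (p : seq 'I_n), path F x p -> (size p).+1 <= k).

Definition valid_decomp : Prop :=
  acyclic_rel /\
  (forall v : V, exists w : 'I_n, org w = v) /\
  (forall (v' : 'I_n) (u : V), E (org v') u ->
     (exists u' : 'I_n, org u' = u /\ descendant v' u') \/
     (forall (r : 'I_n) (p : seq 'I_n), is_root r -> path F r p -> last r p = v' ->
        exists2 u', u' \in r :: p & org u' = u)).

End Decomposition.

(* Main.v *)
Require Import Defs.
From mathcomp Require Import all_boot.
From mathcomp Require Import zify.
Set Implicit Arguments. Unset Strict Implicit. Unset Printing Implicit Defensive.

Section Emb.
Variables (T' T : finType) (F' : rel T') (F : rel T) (h : T' -> T).
Hypothesis H1 : forall a b, F (h a) (h b) = F' a b.
Hypothesis H2 : forall a z, F (h a) z -> exists b, z = h b.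

Lemma path_emb a q : path F (h a) q -> exists2 q', q = map h q' & path F' a q'.
Proof.
elim: q a => [|z q IH] a /=; first by exists [::].
case/andP=> Faz Pq. case: (H2 Faz) => b Ez; subst z.
case: (IH b Pq) => q' -> Pq'. exists (b :: q') => //=. by rewrite -H1 Faz Pq'.
Qed.

Lemma path_map a q : path F' a q -> path F (h a) (map h q).
Proof. by elim: q a => [|b q IH] a //= /andP[Fab Pq]; rewrite H1 Fab IH. Qed.

Lemma connect_emb a z : connect F (h a) z -> exists2 b, z = h b & connect F' a b.
Proof.
move/connectP=> [q Pq ->]. case: (path_emb Pq) => q' -> Pq'.
exists (last a q'); first by rewrite last_map.
by apply/connectP; exists q'.
Qed.

Lemma connect_map a b : connect F' a b -> connect F (h a) (h b).
Proof.
move/connectP=> [q Pq ->]; apply/connectP; exists (map h q); first exact: path_map.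
by rewrite last_map.
Qed.
End Emb.

Section Main.
Variables (V : finType) (E : rel V).

Definition rootT (T : finType) (F : rel T) (w : T) := [forall x, ~~ F x w].

Definition good (T : finType) (F : rel T) (org : T -> V) (S A : {set V}) (k : nat) : Prop :=
 [/\ (forall x y, F x y -> ~~ connect F y x),
     (forall w, org w \in S),
     (forall v, v \in S -> exists w, org w = v),
     (forall v' u, u \in A -> E (org v') u ->
        (exists u', org u' = u /\ connect F v' u') \/
        (forall r p, rootT F r -> path F r p -> last r p = v' ->
           exists2 u', u' \in r :: p & org u' = u))
   & ((exists r p, [/\ rootT F r, path F r p & (size p).+1 = k]) /\
      (forall x p, path F x p -> (size p).+1 <= k))].

Lemma root_anc (T : finType) (F : rel T) :
  (forall x y, F x y -> ~~ connect F y x) -> forall w, exists2 r, rootT F r & connect F r w.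
Proof.
move=> acy.
suff H : forall m w, #|[set y | connect F y w]| <= m -> exists2 r, rootT F r & connect F r w.
  by move=> w; exact: (H _ w (leqnn _)).
elim=> [|m IH] w Hm.
  by move: Hm; rewrite leqn0 => /eqP/cards0_eq/setP/(_ w); rewrite !inE connect0.
case Hr: (rootT F w); first by exists w.
move/negbT: Hr; rewrite /rootT negb_forall => /existsP [y]; rewrite negbK => Fyw.
have [r Rr Cry] : exists2 r, rootT F r & connect F r y.
  apply: IH. rewrite -ltnS. apply: leq_trans Hm. apply: proper_card. apply/properP; split.
    apply/subsetP=> z; rewrite !inE => Czy. exact: connect_trans Czy (connect1 Fyw).
  exists w; first by rewrite inE connect0.
  by rewrite inE (negbTE (acy _ _ Fyw)).
exists r => //. exact: connect_trans Cry (connect1 Fyw).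
Qed.

Lemma good_single x : good (fun _ _ : unit => false) (fun _ => x) [set x] [set x] 1.
Proof.
split.
- by move=> ? ?.
- by move=> _; rewrite inE.
- by move=> v; rewrite inE => /eqP ->; exists tt.
- move=> v' u; rewrite inE => /eqP -> _; left; exists v'; split => //; exact: connect0.
- split; first by exists tt, [::]; split => //; apply/forallP.
  by move=> y [|z p].
Qed.

Definition Fopt (T : finType) (F : rel T) : rel (option T) := fun x y =>
  match x, y with
  | Some a, Some b => F a b
  | None, Some b => rootT F b
  | _, None => false
  end.
Definition oorg (T : finType) (org : T -> V) v : option T -> V :=
  fun x => if x is Some a then org a else v.

Lemma good_addroot (T : finType) (F : rel T) (org : T -> V) (S : {set V}) (v : V) (k : nat) :
  v \in S -> good F org (S :\ v) (S :\ v) k -> good (Fopt F) (oorg org v) S S k.+1.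
Proof.
move=> vS [acy inS surj val [[r0 [p0 [R0 P0 S0]]] ub]].
have H1 : forall a b, Fopt F (Some a) (Some b) = F a b by [].
have H2 : forall a z, Fopt F (Some a) z -> exists b, z = Some b by move=> a [b|] // _; exists b.
have noinNone : forall x, Fopt F x None = false by case.
have rootopt : forall x, rootT (Fopt F) x -> x = None.
  case=> // b /forallP Hb. case Rb: (rootT F b).
    by move: (Hb None) => /=; rewrite Rb.
  move/negbT: Rb; rewrite negb_forall => /existsP [y]; rewrite negbK => Fyb.
  by move: (Hb (Some y)) => /=; rewrite Fyb.
have conNone : forall z, connect (Fopt F) z None -> z = None.
  move=> z /connectP [q]; elim: q z => [|y q IH] z /=; first by move=> _ <-.
  case/andP=> Fzy Pq Lq; move: (IH y Pq Lq) Fzy => ->; by rewrite noinNone.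
split.
- case=> [a|] [b|] //=.
  + move=> Fab; apply/negP => C. case: (connect_emb H1 H2 C) => a' Ea Cba.
    case: Ea => Ea; subst a'. by move: (acy _ _ Fab); rewrite Cba.
  + by move=> _; apply/negP => /conNone.
- by case=> [a|] //=; move: (inS a); rewrite !inE => /andP[].
- move=> u uS; case: (eqVneq u v) => [->|uv]; first by exists None.
  have : u \in S :\ v by rewrite !inE uv.
  case/surj => w <-. by exists (Some w).
- move=> [w|] u uS /= Ewu.
  + case: (eqVneq u v) => [->|uv].
    * right => r p Rr Pp Lp. rewrite (rootopt _ Rr). exists None; [exact: mem_head | done].
    * have uS' : u \in S :\ v by rewrite !inE uv.
      case: (val w u uS' Ewu) => [[u' [Eu Cwu]] | H].
        left; exists (Some u'); split => //. exact: (@connect_map _ _ F (Fopt F) Some H1 _ _ Cwu).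
      right => r p Rr Pp Lp. move: Pp Lp; rewrite (rootopt _ Rr).
      case: p => [|z q] //= /andP [Fz Pq] Lq.
      case: z Fz Pq Lq => [b|] //= Rb Pq Lq.
      case: (path_emb H1 H2 Pq) => q' Eq Pq'. subst q. rewrite last_map in Lq.
      case: Lq => Lq.
      case: (H b q' Rb Pq' Lq) => u' u'in Eu'. exists (Some u') => //.
      rewrite in_cons; apply/orP; right.
      rewrite -[Some b :: map Some q']/(map Some (b :: q')) mem_map //; exact: Some_inj.
  + case: (eqVneq u v) => [->|uv]; first by left; exists None; split => //; exact: connect0.
    have uS' : u \in S :\ v by rewrite !inE uv.
    case: (surj u uS') => w' Ew'. left; exists (Some w'); split => //.
    have [r Rr Crw] := root_anc acy w'. apply: connect_trans (connect_map H1 Crw).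
    exact: connect1.
- split.
  + exists None, (Some r0 :: map Some p0); split => //=; last by rewrite size_map S0.
    + by apply/forallP => x; rewrite noinNone.
    + apply/andP; split; first exact: R0. exact: (@path_map _ _ F (Fopt F) Some H1 _ _ P0).
  + case=> [a|] p Pp.
    * case: (path_emb H1 H2 Pp) => q' -> Pq'. rewrite size_map.
      exact: leq_trans (ub _ _ Pq') (leqnSn _).
    * case: p Pp => [|z q] //= /andP [Fz Pq].
      case: z Fz Pq => [b|] //= _ Pq. case: (path_emb H1 H2 Pq) => q' -> Pq'.
      rewrite size_map. exact: ub _ _ Pq'.
Qed.


Lemma good_comp (T' T : finType) (F' : rel T') (F : rel T) (h : T' -> T)
  (o' : T' -> V) (o : T -> V) (S' A : {set V}) (k : nat) :
  (forall a b, F (h a) (h b) = F' a b) ->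
  (forall a z, F (h a) z -> exists b, z = h b) ->
  injective h ->
  (forall a, rootT F' a -> rootT F (h a)) ->
  (forall r p w, rootT F r -> path F r p -> last r p = h w -> exists2 r', r = h r' & rootT F' r') ->
  (forall a, o (h a) = o' a) ->
  good F' o' S' A k ->
  [/\ (forall a z, F (h a) z -> ~~ connect F z (h a)),
      (forall w, o (h w) \in S'),
      (forall v, v \in S' -> exists w, o (h w) = v),
      (forall w u, u \in A -> E (o (h w)) u ->
        (exists u', o u' = u /\ connect F (h w) u') \/
        (forall r p, rootT F r -> path F r p -> last r p = h w ->
           exists2 u', u' \in r :: p & o u' = u))
    & ((exists r p, [/\ rootT F r, path F r p & (size p).+1 = k]) /\
       (forall a p, path F (h a) p -> (size p).+1 <= k))].
Proof.
move=> H1 H2 Hinj Hr Hs Ho [acy inS surj val [[r0 [p0 [R0 P0 S0]]] ub]].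
split.
- move=> a z Faz. case: (H2 _ _ Faz) => b Ez; subst z. rewrite H1 in Faz.
  apply/negP => C. case: (connect_emb H1 H2 C) => a' Ea Cba.
  have Ea' := Hinj _ _ Ea; subst a'. by move: (acy _ _ Faz); rewrite Cba.
- by move=> w; rewrite Ho.
- by move=> v /surj [w Ew]; exists w; rewrite Ho.
- move=> w u uA; rewrite Ho => Ewu. case: (val w u uA Ewu) => [[u' [Eu Cwu]] | H].
    left; exists (h u'); split; first by rewrite Ho.
    exact: (@connect_map _ _ F' F h H1 _ _ Cwu).
  right => r p Rr Pp Lp. case: (Hs r p w Rr Pp Lp) => r' Er Rr'; subst r.
  case: (path_emb H1 H2 Pp) => p' Ep Pp'; subst p.
  rewrite last_map in Lp. have Lp' := Hinj _ _ Lp.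
  case: (H r' p' Rr' Pp' Lp') => u' u'in Eu'. exists (h u'); last by rewrite Ho.
  by rewrite -[h r' :: _]/(map h (r' :: p')) map_f.
- split.
    exists (h r0), (map h p0); split; [exact: Hr | exact: (@path_map _ _ F' F h H1 _ _ P0) | by rewrite size_map].
  move=> a p Pp. case: (path_emb H1 H2 Pp) => p' -> Pp'. rewrite size_map. exact: (ub _ _ Pp').
Qed.

Definition Fsum (T1 T2 : finType) (F1 : rel T1) (F2 : rel T2) : rel (T1 + T2)%type :=
  fun x y => match x, y with
  | inl a, inl b => F1 a b
  | inr a, inr b => F2 a b
  | _, _ => false end.
Definition sorg (T1 T2 : finType) (o1 : T1 -> V) (o2 : T2 -> V) : (T1 + T2)%type -> V :=
  fun x => match x with inl a => o1 a | inr b => o2 b end.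

Lemma good_union (T1 T2 : finType) (F1 : rel T1) (F2 : rel T2) (o1 : T1 -> V) (o2 : T2 -> V)
  (S1 S2 A : {set V}) (k1 k2 : nat) :
  good F1 o1 S1 A k1 -> good F2 o2 S2 A k2 ->
  good (Fsum F1 F2) (sorg o1 o2) (S1 :|: S2) A (maxn k1 k2).
Proof.
move=> G1 G2.
have Hr1 : forall a, rootT F1 a -> rootT (Fsum F1 F2) (inl a).
  move=> a Ra; apply/forallP => -[x|x] //=. exact: (forallP Ra x).
have Hr2 : forall a, rootT F2 a -> rootT (Fsum F1 F2) (inr a).
  move=> a Ra; apply/forallP => -[x|x] //=. exact: (forallP Ra x).
have H2l : forall a z, Fsum F1 F2 (inl a) z -> exists b, z = inl b by move=> a [c|c] // _; exists c.
have H2r : forall a z, Fsum F1 F2 (inr a) z -> exists b, z = inr b by move=> a [c|c] // _; exists c.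
have Hs1 : forall r p w, rootT (Fsum F1 F2) r -> path (Fsum F1 F2) r p -> last r p = inl w ->
    exists2 r', r = inl r' & rootT F1 r'.
  move=> [a|b] p w Rr Pp Lp.
    exists a => //; apply/forallP => x. exact: (forallP Rr (inl x)).
  case: (path_emb (F' := F2) (h := inr) (fun _ _ => erefl) H2r Pp) => p' Ep _; subst p.
  by rewrite last_map in Lp.
have Hs2 : forall r p w, rootT (Fsum F1 F2) r -> path (Fsum F1 F2) r p -> last r p = inr w ->
    exists2 r', r = inr r' & rootT F2 r'.
  move=> [b|a] p w Rr Pp Lp.
    case: (path_emb (F' := F1) (h := inl) (fun _ _ => erefl) H2l Pp) => p' Ep _; subst p.
    by rewrite last_map in Lp.
  exists a => //; apply/forallP => x. exact: (forallP Rr (inr x)).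
have inlI : injective (@inl T1 T2) by move=> a b [].
have inrI : injective (@inr T1 T2) by move=> a b [].
have [A1 I1 Su1 V1 [[r1 [p1 [R1 P1 Z1]]] U1]] :=
  @good_comp _ _ F1 (Fsum F1 F2) inl o1 (sorg o1 o2) S1 A k1 (fun _ _ => erefl)
   H2l inlI Hr1 Hs1 (fun _ => erefl) G1.
have [A2 I2 Su2 V2 [[r2 [p2 [R2 P2 Z2]]] U2]] :=
  @good_comp _ _ F2 (Fsum F1 F2) inr o2 (sorg o1 o2) S2 A k2 (fun _ _ => erefl)
   H2r inrI Hr2 Hs2 (fun _ => erefl) G2.
split.
- by case=> [a|a] y Fxy; [exact: A1 | exact: A2].
- by case=> [a|a]; rewrite inE ?I1 ?I2 ?orbT.
- by move=> v; rewrite inE => /orP [/Su1 [w Ew] | /Su2 [w Ew]]; [exists (inl w) | exists (inr w)].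
- by case=> [w|w]; [exact: V1 | exact: V2].
- split.
    case: (leqP k1 k2) => Hk.
      idtac. by exists r2, p2.
    idtac. by exists r1, p1.
  case=> [a|a] p Pp.
    exact: leq_trans (U1 _ _ Pp) (leq_maxl _ _).
  exact: leq_trans (U2 _ _ Pp) (leq_maxr _ _).
Qed.


Lemma good_lift (T : finType) (F : rel T) (o : T -> V) (R A : {set V}) k :
  good F o R R k -> (forall x u, x \in R -> u \in A -> E x u -> u \in R) -> good F o R A k.
Proof.
move=> [acy inS surj val dp] Hc; split => // v' u uA Eu.
exact: val (Hc _ _ (inS v') uA Eu) Eu.
Qed.

Lemma good_list (A : {set V}) (f : {set V} -> nat) (Rs : seq {set V}) :
  Rs != [::] ->
  (forall R, R \in Rs -> exists (T : finType) (F : rel T) (o : T -> V), good F o R A (f R)) ->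
  exists (T : finType) (F : rel T) (o : T -> V),
    good F o (\bigcup_(R <- Rs) R) A (\max_(R <- Rs) f R).
Proof.
elim: Rs => [|R Rs IH] // _ H. rewrite !big_cons.
case: Rs IH H => [|R' Rs] IH H.
  rewrite !big_nil setU0 maxn0. by apply: H; rewrite mem_head.
have [T1 [F1 [o1 G1]]] := H R (mem_head _ _).
have [T2 [F2 [o2 G2]]] : exists (T : finType) (F : rel T) (o : T -> V),
    good F o (\bigcup_(R <- R' :: Rs) R) A (\max_(R <- R' :: Rs) f R).
  by apply: IH => // R0 HR0; apply: H; rewrite inE HR0 orbT.
exists _, (Fsum F1 F2), (sorg o1 o2). exact: good_union G1 G2.
Qed.

Lemma frag_closed (S R : {set V}) : R \in fragments E S ->
  [/\ R \subset S, R != set0 & forall x u, x \in R -> u \in S -> E x u -> u \in R].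
Proof.
rewrite inE => /andP [/andP [RS /existsP [r /andP [rR Rr]]] /forallP Hmax].
have rS : r \in S := subsetP RS r rR.
have candr : frag_cand E S (reach E S r).
  apply/andP; split.
    by apply/subsetP => y; rewrite inE => /andP[].
  apply/existsP; exists r; apply/andP; split; first by rewrite inE rS connect0.
  exact: subxx.
have ER : reach E S r = R.
  by have := Hmax (reach E S r); rewrite candr Rr /= => /eqP.
split => //; first by apply/set0Pn; exists r.
move=> x u; rewrite -ER !inE => /andP [xS Crx] uS Exu. rewrite uS /=.
apply: connect_trans Crx (connect1 _). by rewrite /induced /= xS uS Exu.
Qed.

Lemma frag_ext (S C : {set V}) : frag_cand E S C -> exists2 R, R \in fragments E S & C \subset R.
Proof.
move=> HC. have : #|S| - #|C| <= #|S| - #|C| by [].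
move: {2}(#|S| - #|C|) => m. elim: m C HC => [|m IH] C HC Hm;
  case Hb: [forall R' : {set V}, (frag_cand E S R' && (C \subset R')) ==> (R' == C)];
  try by exists C => //; rewrite inE HC Hb.
all: move/negbT: Hb; rewrite negb_forall => /existsP [R'];
  rewrite negb_imply => /andP [/andP [HR' CR'] nR'].
all: have ltC : #|C| < #|R'| by apply: proper_card; rewrite properEneq eq_sym nR' CR'.
all: have R'S : #|R'| <= #|S| by apply: subset_leq_card; case/andP: HR'.
  exfalso; lia.
have [R HR R'R] := IH R' HR' ltac:(lia).
exists R => //. exact: subset_trans CR' R'R.
Qed.

Lemma frag_cover (S : {set V}) (x : V) : x \in S -> exists2 R, R \in fragments E S & x \in R.
Proof.
move=> xS.
have HC : frag_cand E S [set x].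
  rewrite /frag_cand sub1set xS /=; apply/existsP; exists x.
  by rewrite set11 /= sub1set inE xS connect0.
case: (frag_ext HC) => R HR; rewrite sub1set => xR. by exists R.
Qed.

Lemma frag_small (S R : {set V}) : #|fragments E S| != 1 -> R \in fragments E S -> #|R| < #|S|.
Proof.
move=> Hn HR. have [RS _ _] := frag_closed HR.
rewrite ltn_neqAle subset_leq_card // andbT. apply/negP => /eqP eqRS.
have ES : R = S by apply/eqP; rewrite eqEcard RS eqRS leqnn.
subst R.
have : fragments E S = [set S].
  apply/setP => R'; rewrite in_set1; apply/idP/eqP => [HR'|->//].
  have [R'S _ _] := frag_closed HR'.
  move: HR'; rewrite inE => /andP [_ /forallP Hmax].
  move: HR; rewrite inE => /andP [cS _].
  by have := Hmax S; rewrite cS R'S /= => /eqP.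
by move=> EF; move: Hn; rewrite EF cards1.
Qed.

End Main.

Lemma minseq (I : eqType) (s : seq I) (b : nat) (f : I -> nat) :
  s != [::] -> (forall i, i \in s -> f i < b) ->
  exists2 i, i \in s & \big[minn/b]_(j <- s) f j = f i.
Proof.
elim: s => [|x s IH] // _ H. rewrite big_cons.
case: s IH H => [|y s] IH H.
  rewrite big_nil. exists x; first exact: mem_head.
  by apply/minn_idPl; apply: ltnW; apply: H; rewrite mem_head.
have [j Hj Ej] := IH isT (fun i Hi => H i (@mem_behead _ [:: x, y & s] i Hi)).
rewrite Ej. case: (leqP (f x) (f j)) => Hxj.
  by exists x => //; exact: mem_head.
by exists j => //; rewrite in_cons Hj orbT.
Qed.

Lemma main_lemma (V : finType) (E : rel V) (n : nat) : forall S : {set V}, 0 < #|S| -> #|S| <= n ->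
  exists (T : finType) (F : rel T) (o : T -> V),
    good E F o S S (ddp_fuel E n S) /\ ddp_fuel E n S <= #|S|.
Proof.
elim: n => [|n IH] S S0 Sn; first by move: (leq_trans S0 Sn).
rewrite /=. case: ifP => [/eqP S1 | /negbT S1].
  have [x Ex] : exists x, S = [set x] by apply/cards1P; rewrite S1. subst S.
  exists _, (fun _ _ : unit => false), (fun _ => x).
  by split; [exact: good_single | rewrite cards1].
have S2 : 1 < #|S| by rewrite ltn_neqAle eq_sym S1 S0.
case: ifP => [/eqP Fr1 | /negbT Fr1].
  have Hsub : forall v, v \in S -> 0 < #|S :\ v| /\ #|S :\ v| <= n.
    move=> v vS; move: (cardsD1 v S); rewrite vS => H. split; lia.
  have Hb : forall v, v \in enum S -> ddp_fuel E n (S :\ v) < #|S|.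
    move=> v; rewrite mem_enum => vS; have [H0 H1] := Hsub v vS.
    have [T [F [o [_ B]]]] := IH (S :\ v) H0 H1.
    move: (cardsD1 v S); rewrite vS => H. lia.
  have ne : enum S != [::].
    by apply/eqP => H; move: S0; rewrite cardE H.
  rewrite -big_filter deprecated_filter_index_enum. have [v vS Ev] := minseq ne Hb. rewrite Ev.
  rewrite mem_enum in vS. have [H0 H1] := Hsub v vS.
  have [T [F [o [G B]]]] := IH (S :\ v) H0 H1.
  exists _, (Fopt F), (oorg o v). split; first exact: good_addroot vS G.
  have := Hb v; rewrite mem_enum => /(_ vS). done.
have [x xS] : exists x, x \in S by apply/set0Pn; rewrite -card_gt0.
have [R0 HR0 _] := frag_cover E xS.
have ne : enum (fragments E S) != [::].
  apply/eqP => H; have : R0 \in enum (fragments E S) by rewrite mem_enum.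
  by rewrite H.
have GL := @good_list V E S (ddp_fuel E n) (enum (fragments E S)) ne.
have [T [F [o G]]] : exists (T : finType) (F : rel T) (o : T -> V),
    good E F o (\bigcup_(R <- enum (fragments E S)) R) S
      (\max_(R <- enum (fragments E S)) ddp_fuel E n R).
  apply: GL => R; rewrite mem_enum => HR.
  have [RS RN Rc] := frag_closed HR.
  have Rlt := frag_small Fr1 HR.
  have [T [F [o [G _]]]] := IH R ltac:(by rewrite card_gt0) ltac:(lia).
  exists T, F, o. exact: good_lift G Rc.
rewrite !big_enum in G.
have EU : \bigcup_(R in fragments E S) R = S.
  apply/setP => y; apply/bigcupP/idP => [[R HR yR]|yS].
    by have [RS _ _] := frag_closed HR; exact: subsetP RS y yR.
  by have [R HR yR] := frag_cover E yS; exists R.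
rewrite EU in G. exists T, F, o; split => //.
apply: (big_ind (fun m => m <= #|S|)) => //; first by move=> a b Ha Hb; rewrite geq_max Ha Hb.
move=> R HR. have [RS RN Rc] := frag_closed HR. have Rlt := frag_small Fr1 HR.
have [T' [F' [o' [_ B]]]] := IH R ltac:(by rewrite card_gt0) ltac:(lia).
lia.
Qed.

Theorem theorem3p2 (V : finType) (E : rel V) (k : nat) :
  irreflexive E -> 0 < #|V| -> ddp E [set: V] = k ->
  exists (n : nat) (F : rel 'I_n) (org : 'I_n -> V),
    valid_decomp E F org /\ depth F k.
Proof.
move=> _ V0 <-.
have [T [F [o [G _]]]] := @main_lemma V E #|[set: V]| [set: V] ltac:(by rewrite cardsT) (leqnn _).
case: G => acy inS surj val [[r0 [p0 [R0 P0 S0]]] ub].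
rewrite /ddp.
set F' : rel 'I_#|T| := fun i j => F (enum_val i) (enum_val j).
have Ha : forall a b, F (enum_val a) (enum_val b) = F' a b by [].
have Hb : forall (a : 'I_#|T|) (z : T), F (enum_val a) z -> exists b : 'I_#|T|, z = enum_val b.
  by move=> a z Faz; exists (enum_rank z); rewrite enum_rankK.
have Hc : forall a b, F' (enum_rank a) (enum_rank b) = F a b.
  by move=> a b; rewrite /F' !enum_rankK.
exists #|T|, F', (fun i => o (enum_val i)). split; [split; [|split] | split].
- move=> x y Fxy; apply/negP => C.
  have := @connect_map _ _ F' F enum_val Ha _ _ C.
  by rewrite (negbTE (acy _ _ Fxy)).
- move=> v. have [w Ew] := surj v (in_setT v). exists (enum_rank w). by rewrite enum_rankK.
- move=> v' u Eu. case: (val (enum_val v') u (in_setT u) Eu) => [[u' [Eu' C]] | H].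
    left; exists (enum_rank u'); split; first by rewrite enum_rankK.
    have := @connect_map _ _ F F' enum_rank Hc _ _ C. by rewrite enum_valK.
  right => r p Rr Pp Lp.
  have Rr' : rootT F (enum_val r).
    apply/forallP => x. have := forallP Rr (enum_rank x). by rewrite /F' enum_rankK.
  have Pp' := @path_map _ _ F' F enum_val Ha _ _ Pp.
  have Lp' : last (enum_val r) (map enum_val p) = enum_val v' by rewrite last_map Lp.
  case: (H _ _ Rr' Pp' Lp') => u' u'in Eu'.
  have : u' \in map enum_val (r :: p) by [].
  case/mapP => j jin Ej. exists j => //. by rewrite -Ej.
- exists (enum_rank r0), (map enum_rank p0). split; last by rewrite size_map.
  exact: (@path_map _ _ F F' enum_rank Hc _ _ P0).
- move=> x p Pp. have := @path_map _ _ F' F enum_val Ha _ _ Pp.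
  move/ub. by rewrite size_map.
Qed.
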